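(* Let $\mathbf{C}$ be a category of $\mathbf{FI}$ type, $c$ an object and $V$ a finite-dimensional $G_c$-representation with character $\chi_V$. Then the character of the $\mathbf{C}$-module $\mathrm{Ind}_c(V)$ is $$\chi_{\mathrm{Ind}_c(V)}=\sum_{\mu\in\mathrm{conj}(G_c)}\chi_V(\mu)\binom{X}{\mu},$$ where $\mathrm{conj}(G_c)$ is the set of conjugacy classes of $G_c$ and $\chi_V(\mu)$ is the value of $\chi_V$ on any element of $\mu$. In particular it is a character polynomial of degree $c$.
   Context: A category $\mathbf{C}$ is of $\mathbf{FI}$ type if: (1) all Hom-sets are finite; (2) every morphism is a monomorphism and every endomorphism is an isomorphism; (3) for all objects $c,d$ the group $G_d=\mathrm{Aut}_{\mathbf{C}}(d)$ acts transitively on $\mathrm{Hom}_{\mathbf{C}}(c,d)$; (4) for every $d$ only finitely many isomorphism classes of $c$ have $\mathrm{Hom}(c,d)\neq\emptyset$; (5) every pair $c_1\to d\leftarrow c_2$ has a pullback, and every pair $f_i:p\to c_i$ has a weak push-out, i.e. a commutative pullback square $g_i:c_i\to d$ such that for every other pullback square $h_i:c_i\to z$ with $h_1f_1=h_2f_2$ there is a unique $h:d\to z$ with $hg_i=h_i$. $\mathrm{Ind}_c(V)$ is the $\mathbf{C}$-module $d\mapsto\mathbb{C}[\mathrm{Hom}(c,d)]\otimes_{\mathbb{C}[G_c]}V$ (morphisms act by postcomposition); its character is the collection of characters of the $G_d$-representations $\mathrm{Ind}_c(V)_d$. Binomial set: $\binom{d}{c}=\mathrm{Hom}(c,d)/G_c$.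 For a conjugacy class $\mu\subseteq G_c$, $\binom{X}{\mu}$ is the class function on every $G_d$ given by $\sigma\mapsto\#\{[f]\in\binom{d}{c}:\exists\psi\in\mu,\ \sigma f=f\psi\}$, of degree $c$. Character polynomials are $\mathbb{C}$-linear combinations of these. *)

(* Defs.v *)
From HB Require Import structures.
From mathcomp Require Import all_boot all_order all_algebra all_fingroup.
From mathcomp Require Import mxrepresentation algC.
Set Implicit Arguments. Unset Strict Implicit. Unset Printing Implicit Defensive.
Import GRing.Theory.
Local Open Scope ring_scope.

Record category := Category {
  Obj : Type;
  Hom : Obj -> Obj -> finType;
  compm : forall a b c : Obj, Hom b c -> Hom a b -> Hom a c;
  idm : forall a : Obj, Hom a a;
  compA : forall a b c d (f : Hom c d) (g : Hom b c) (h : Hom a b),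
      compm f (compm g h) = compm (compm f g) h;
  comp1m : forall a b (f : Hom a b), compm (idm b) f = f;
  compm1 : forall a b (f : Hom a b), compm f (idm a) = f
}.

Arguments compm {_ _ _ _} _ _.
Arguments idm {_} _.
Arguments Hom : clear implicits.

Section FIType.
Variable C : category.
Local Notation Ob := (Obj C).
Local Notation H := (Hom C).

Definition is_iso (a b : Ob) (f : H a b) : Prop :=
  exists g : H b a, compm g f = idm a /\ compm f g = idm b.

Definition isomorphic (a b : Ob) : Prop := exists f : H a b, is_iso f.

Definition is_mono (b c : Ob) (f : H b c) : Prop :=
  forall a (g h : H a b), compm f g = compm f h -> g = h.

Definition is_pullback (p c1 c2 d : Ob) (f1 : H p c1) (f2 : H p c2)
    (g1 : H c1 d) (g2 : H c2 d) : Prop :=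
  compm g1 f1 = compm g2 f2 /\
  forall q (h1 : H q c1) (h2 : H q c2), compm g1 h1 = compm g2 h2 ->
    exists! h : H q p, compm f1 h = h1 /\ compm f2 h = h2.

Definition FItype : Prop :=
  (* (1) finiteness of Hom-sets: built in (Hom a b is a finType) *)
  (forall b c (f : H b c), is_mono f) /\
  (forall d (f : H d d), is_iso f) /\
  (forall c d (f g : H c d), exists s : H d d, compm s f = g) /\
  (forall d, exists (k : nat) (e : 'I_k -> Ob),
      forall c, (exists f : H c d, True) -> exists i, isomorphic c (e i)) /\
  (forall c1 c2 d (g1 : H c1 d) (g2 : H c2 d),
      exists p (f1 : H p c1) (f2 : H p c2), is_pullback f1 f2 g1 g2) /\
  (forall p c1 c2 (f1 : H p c1) (f2 : H p c2),
      exists d (g1 : H c1 d) (g2 : H c2 d),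
        is_pullback f1 f2 g1 g2 /\
        forall z (h1 : H c1 z) (h2 : H c2 z), is_pullback f1 f2 h1 h2 ->
          exists! h : H d z, compm h g1 = h1 /\ compm h g2 = h2).

(* Conjugacy classes of G_c = Hom(c,c) (every endomorphism is an iso). *)
(* phi is conjugate to psi iff phi = g psi g^-1 for some g, i.e.       *)
(* g psi = phi g.                                                      *)
Definition conjclass (c : Ob) (psi : H c c) : {set H c c} :=
  [set phi | [exists g : H c c, compm g psi == compm phi g]].

Definition conjclasses (c : Ob) : {set {set H c c}} :=
  [set conjclass psi | psi : H c c].

Definition class_rep (c : Ob) (mu : {set H c c}) : H c c :=
  odflt (idm c) [pick psi in mu].

(* Binomial set  (d choose c) = Hom(c,d)/G_c : the orbits of the right
   action of G_c on Hom(c,d) by precomposition. *)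
Definition rorbit (c d : Ob) (f : H c d) : {set H c d} :=
  [set compm f psi | psi : H c c].

Definition binomset (c d : Ob) : {set {set H c d}} :=
  [set rorbit f | f : H c d].

Definition binomX (c : Ob) (mu : {set H c c}) (d : Ob) (sigma : H d d) : nat :=
  #|[set O in binomset c d |
      [exists f in O, exists psi in mu, compm sigma f == compm f psi]]|.

(* V = C^n (column vectors), with G_c acting on the left through a     *)
(* matrix representation rho : Hom(c,c) -> 'M_n  (psi . v = rho psi v).*)
(* C[Hom(c,d)] (x) V is modelled as matrices 'M_(#|Hom(c,d)|, n)       *)
(* (row k = coefficient vector (transposed) of the basis element       *)
(* enum_val k), flattened to row vectors by mxvec.                     *)
Section Ind.
Variables (c : Ob) (n : nat) (rho : H c c -> 'M[algC]_n) (d : Ob).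

Local Notation N := (#|H c d| * n)%N.

Definition tens (f : H c d) (v : 'cV[algC]_n) : 'rV[algC]_N :=
  mxvec (\matrix_(k < #|H c d|, j < n) ((enum_val k == f)%:R * v j 0)).

Definition tens_rel (f : H c d) (psi : H c c) (j : 'I_n) : 'rV[algC]_N :=
  tens (compm f psi) (delta_mx j 0) - tens f (rho psi *m delta_mx j 0).

(* the subspace of C[Hom(c,d)] (x)_C V spanned by the balancing
   relations; C[Hom(c,d)] (x)_{C[G_c]} V is the quotient by it. *)
Definition tens_rels : 'M[algC]_N :=
  (\sum_(f : H c d) \sum_(psi : H c c) \sum_(j < n) <<tens_rel f psi j>>)%MS.

Definition postcomp_mx (sigma : H d d) : 'M[algC]_(#|H c d|) :=
  \matrix_(k, i) (compm sigma (enum_val i) == enum_val k)%:R.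

Definition act_tens (sigma : H d d) : 'M[algC]_N :=
  lin1_mx (fun x : 'rV[algC]_N => mxvec (postcomp_mx sigma *m vec_mx x)).

(* the induced action on the factor module  (C[Hom(c,d)] (x) V) / rels,
   using MathComp's factor-module coordinates (cf. factmod_mx) *)
Definition Ind_mx (sigma : H d d) :=
  in_factmod tens_rels (@val_factmod _ _ tens_rels _ 1%:M *m act_tens sigma).

Definition Ind_char (sigma : H d d) : algC := \tr (Ind_mx sigma).

End Ind.

Definition rep_char (c : Ob) (n : nat) (rho : H c c -> 'M[algC]_n)
    (psi : H c c) : algC := \tr (rho psi).

End FIType.

(* Main.v *)
From Pilot Require Import Defs.
From HB Require Import structures.
From mathcomp Require Import all_boot all_order all_algebra all_fingroup.
From mathcomp Require Import mxrepresentation algC.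
Set Implicit Arguments. Unset Strict Implicit. Unset Printing Implicit Defensive.
Import GRing.Theory.
Local Open Scope ring_scope.

Lemma monoC (C : category) (hC : FItype C) b c (f : Defs.Hom C b c) : is_mono f.
Proof. by case: hC. Qed.

Lemma isoC (C : category) (hC : FItype C) d (f : Defs.Hom C d d) : is_iso f.
Proof. by case: hC => _ []. Qed.

Definition rr (C : category) (c d : Obj C) (f : Defs.Hom C c d) : Defs.Hom C c d :=
  odflt f [pick g in rorbit f].

Definition phi (C : category) (c d : Obj C) (f : Defs.Hom C c d) : Defs.Hom C c c :=
  odflt (Defs.idm c) [pick psi | compm (rr f) psi == f].

Lemma rorbitP (C : category) (c d : Obj C) (f g : Defs.Hom C c d) :
  reflect (exists psi, g = compm f psi) (g \in rorbit f).
Proof.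
apply: (iffP imsetP) => [[psi _ ->]|[psi ->]]; by exists psi.
Qed.

Lemma self_rorbit (C : category) (c d : Obj C) (f : Defs.Hom C c d) : f \in rorbit f.
Proof. by apply/rorbitP; exists (Defs.idm c); rewrite Defs.compm1. Qed.

Lemma rorbitM (C : category) (hC : FItype C) (c d : Obj C) (f : Defs.Hom C c d) psi :
  rorbit (compm f psi) = rorbit f.
Proof.
apply/setP => g; apply/rorbitP/rorbitP => [[a ->]|[a ->]].
  by exists (compm psi a); rewrite Defs.compA.
have [b [hb1 hb2]] := isoC hC psi.
by exists (compm b a); rewrite Defs.compA -(Defs.compA f psi b) hb2 Defs.compm1.
Qed.

Lemma rr_orbit (C : category) (c d : Obj C) (f g : Defs.Hom C c d) :
  rorbit g = rorbit f -> rr g = rr f.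
Proof.
move=> E; rewrite /rr E; case: pickP => //= H.
by have := H f; rewrite self_rorbit.
Qed.

Lemma rr_in (C : category) (c d : Obj C) (f : Defs.Hom C c d) : rr f \in rorbit f.
Proof. by rewrite /rr; case: pickP => //= _; apply: self_rorbit. Qed.

Lemma rrM (C : category) (hC : FItype C) (c d : Obj C) (f : Defs.Hom C c d) psi :
  rr (compm f psi) = rr f.
Proof. by apply: rr_orbit; apply: rorbitM. Qed.

Lemma rr_idem (C : category) (hC : FItype C) (c d : Obj C) (f : Defs.Hom C c d) :
  rr (rr f) = rr f.
Proof. by have /rorbitP[a Ea] := rr_in f; rewrite {1}Ea rrM. Qed.

Lemma phiP (C : category) (hC : FItype C) (c d : Obj C) (f : Defs.Hom C c d) :
  compm (rr f) (phi f) = f.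
Proof.
have /rorbitP[a Ea] := rr_in f.
have [b [hb1 hb2]] := isoC hC a.
rewrite /phi; case: pickP => [psi /eqP //|H].
by have := H b; rewrite Ea -Defs.compA hb2 Defs.compm1 eqxx.
Qed.

Lemma phiM (C : category) (hC : FItype C) (c d : Obj C) (f : Defs.Hom C c d) psi :
  phi (compm f psi) = compm (phi f) psi.
Proof.
have E : compm (rr f) (phi (compm f psi)) = compm (rr f) (compm (phi f) psi).
  by rewrite -{1}(rrM hC f psi) (phiP hC) Defs.compA (phiP hC).
exact: (@monoC _ hC _ _ (rr f) _ _ _ E).
Qed.

Lemma conjP (C : category) (c : Obj C) (a x : Defs.Hom C c c) :
  reflect (exists g, compm g a = compm x g) (x \in conjclass a).
Proof.
rewrite inE; apply: (iffP existsP) => [[g /eqP]|[g E]]; exists g => //.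
by apply/eqP.
Qed.

Lemma conj_refl (C : category) (c : Obj C) (a : Defs.Hom C c c) : a \in conjclass a.
Proof. by apply/conjP; exists (Defs.idm c); rewrite Defs.comp1m Defs.compm1. Qed.

Lemma conj_eq (C : category) (hC : FItype C) (c : Obj C) (a x : Defs.Hom C c c) :
  x \in conjclass a -> conjclass a = conjclass x.
Proof.
case/conjP => g Eg; have [g' [h1 h2]] := isoC hC g.
apply/setP => y; apply/conjP/conjP => [[h Eh]|[k Ek]].
  exists (compm h g').
  have Ea : compm a g' = compm g' x.
    by rewrite -[compm a g']Defs.comp1m -h1 -!Defs.compA (Defs.compA g a g') Eg -!Defs.compA h2 Defs.compm1.
  by rewrite -Defs.compA -Ea Defs.compA Eh -Defs.compA.
by exists (compm k g); rewrite -Defs.compA Eg !Defs.compA Ek.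
Qed.

Lemma mul_lin1 (R : comNzRingType) m n (h : 'rV[R]_m -> 'rV[R]_n)
  (hD : forall x y, h (x + y) = h x + h y) (hZ : forall a x, h (a *: x) = a *: h x)
  u : u *m lin1_mx h = h u.
Proof.
have h0 : h 0 = 0 by rewrite -(scale0r (0 : 'rV_m)) hZ scale0r.
rewrite [u in RHS]row_sum_delta (big_morph h hD h0); apply/rowP=> i.
by rewrite mxE summxE; apply: eq_bigr => j _; rewrite hZ !mxE.
Qed.

Lemma sum_enum_eq (T : finType) (R : nzRingType) (f : T) (G : 'I_#|T| -> R) :
  \sum_(i < #|T|) (enum_val i == f)%:R * G i = G (enum_rank f).
Proof.
rewrite (bigD1 (enum_rank f)) //= enum_rankK eqxx mul1r big1 ?addr0 // => i ne.
case: eqP => [E|]; last by rewrite mul0r.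
by move: ne; rewrite -E enum_valK eqxx.
Qed.

Definition Tm (C : category) (c d : Obj C) n (f : Defs.Hom C c d) (v : 'cV[algC]_n)
  : 'M[algC]_(#|Defs.Hom C c d|, n) := \matrix_(k, j) ((enum_val k == f)%:R * v j 0).

Lemma tensE (C : category) (c d : Obj C) n (f : Defs.Hom C c d) (v : 'cV[algC]_n) :
  tens f v = mxvec (Tm f v).
Proof. by []. Qed.

Lemma act_tensE (C : category) (c d : Obj C) n
   (sigma : Defs.Hom C d d) (f : Defs.Hom C c d) (v : 'cV[algC]_n) :
  tens f v *m act_tens c n sigma = tens (compm sigma f) v.
Proof.
rewrite /act_tens mul_lin1; last first.
- by move=> a x; rewrite !linearZ.
- by move=> x y; rewrite !linearD.
rewrite tensE mxvecK tensE; congr mxvec; apply/matrixP => k j; rewrite !mxE.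
under eq_bigr => i _ do rewrite !mxE mulrCA.
rewrite sum_enum_eq enum_rankK.
by rewrite eq_sym.
Qed.

Definition Pf (C : category) (c : Obj C) n (rho : Defs.Hom C c c -> 'M[algC]_n) (d : Obj C)
  (M : 'M[algC]_(#|Defs.Hom C c d|, n)) : 'M[algC]_(#|Defs.Hom C c d|, n) :=
  \matrix_(k, j) \sum_(i < #|Defs.Hom C c d|)
     ((rr (enum_val i) == enum_val k)%:R *
        \sum_(l < n) M i l * rho (phi (enum_val i)) j l).

Definition Pmx (C : category) (c : Obj C) n (rho : Defs.Hom C c c -> 'M[algC]_n) (d : Obj C)
  : 'M[algC]_(#|Defs.Hom C c d| * n) :=
  lin1_mx (fun x => mxvec (Pf rho (vec_mx x))).

Lemma PfD (C : category) (c : Obj C) n (rho : Defs.Hom C c c -> 'M[algC]_n) (d : Obj C)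
  (M N : 'M[algC]_(#|Defs.Hom C c d|, n)) : Pf rho (M + N) = Pf rho M + Pf rho N.
Proof.
apply/matrixP => k j; rewrite !mxE -big_split; apply: eq_bigr => i _ /=.
rewrite -mulrDr -big_split; congr (_ * _); apply: eq_bigr => l _.
by rewrite !mxE mulrDl.
Qed.

Lemma PfZ (C : category) (c : Obj C) n (rho : Defs.Hom C c c -> 'M[algC]_n) (d : Obj C)
  a (M : 'M[algC]_(#|Defs.Hom C c d|, n)) : Pf rho (a *: M) = a *: Pf rho M.
Proof.
apply/matrixP => k j; rewrite !mxE mulr_sumr; apply: eq_bigr => i _ /=.
rewrite [RHS]mulrCA [in RHS]mulr_sumr; congr (_ * _); apply: eq_bigr => l _.
by rewrite !mxE mulrA.
Qed.

Lemma PmxE (C : category) (c : Obj C) n (rho : Defs.Hom C c c -> 'M[algC]_n) (d : Obj C)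
  (M : 'M[algC]_(#|Defs.Hom C c d|, n)) : mxvec M *m Pmx rho d = mxvec (Pf rho M).
Proof.
rewrite /Pmx mul_lin1 ?mxvecK // => [x y|a x].
  by rewrite !linearD /= PfD linearD.
by rewrite !linearZ /= PfZ linearZ.
Qed.

Lemma Pf_tens (C : category) (c : Obj C) n (rho : Defs.Hom C c c -> 'M[algC]_n) (d : Obj C)
  (f : Defs.Hom C c d) (v : 'cV[algC]_n) :
  Pf rho (Tm f v) = Tm (rr f) (rho (phi f) *m v).
Proof.
apply/matrixP => k j; rewrite !mxE.
under eq_bigr => i _.
  rewrite (eq_bigr (fun l => (enum_val i == f)%:R * (v l 0 * rho (phi (enum_val i)) j l)));
    last by move=> l _; rewrite !mxE mulrA.
  rewrite -mulr_sumr mulrCA.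
  over.
rewrite /= sum_enum_eq enum_rankK eq_sym; congr (_ * _).
by apply: eq_bigr => l _; rewrite mulrC.
Qed.

Lemma rel_sub (C : category) (c : Obj C) n (rho : Defs.Hom C c c -> 'M[algC]_n) (d : Obj C)
  (f : Defs.Hom C c d) psi j : (tens_rel rho f psi j <= tens_rels rho d)%MS.
Proof.
rewrite /tens_rels; apply: (sumsmx_sup f) => //; apply: (sumsmx_sup psi) => //.
by apply: (sumsmx_sup j) => //; rewrite genmxE.
Qed.

Lemma rels_sub (C : category) (c : Obj C) n (rho : Defs.Hom C c c -> 'M[algC]_n) (d : Obj C)
  m (X : 'M[algC]_(m, #|Defs.Hom C c d| * n)) :
  (forall f psi j, tens_rel rho f psi j <= X)%MS -> (tens_rels rho d <= X)%MS.
Proof.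
move=> H; apply/sumsmx_subP => f _; apply/sumsmx_subP => psi _.
by apply/sumsmx_subP => j _; rewrite genmxE.
Qed.

Lemma rel_ker (C : category) (hC : FItype C) (c : Obj C) n (rho : Defs.Hom C c c -> 'M[algC]_n)
  (rhoM : forall g h, rho (compm g h) = rho g *m rho h) (d : Obj C)
  (f : Defs.Hom C c d) psi j : tens_rel rho f psi j *m Pmx rho d = 0.
Proof.
rewrite /tens_rel mulmxBl !tensE !PmxE !Pf_tens (rrM hC) (phiM hC) rhoM mulmxA.
by rewrite subrr.
Qed.

Lemma Tm_delta (C : category) (c d : Obj C) n (k : 'I_#|Defs.Hom C c d|) (j : 'I_n) :
  delta_mx k j = Tm (enum_val k) (delta_mx j 0).
Proof.
apply/matrixP => k' j'; rewrite !mxE (inj_eq enum_val_inj) eqxx andbT.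
by case: (k' == k); case: (j' == j); rewrite ?mul1r ?mul0r.
Qed.

Lemma rel_row (C : category) (hC : FItype C) (c : Obj C) n (rho : Defs.Hom C c c -> 'M[algC]_n)
  (d : Obj C) (k : 'I_#|Defs.Hom C c d|) (j : 'I_n) :
  mxvec (delta_mx k j) - mxvec (delta_mx k j) *m Pmx rho d
  = tens_rel rho (rr (enum_val k)) (phi (enum_val k)) j.
Proof.
by rewrite PmxE Tm_delta Pf_tens /tens_rel (phiP hC) !tensE.
Qed.

Lemma rel_act (C : category) (c : Obj C) n (rho : Defs.Hom C c c -> 'M[algC]_n) (d : Obj C)
  (sigma : Defs.Hom C d d) (f : Defs.Hom C c d) psi j :
  tens_rel rho f psi j *m act_tens c n sigma = tens_rel rho (compm sigma f) psi j.
Proof. by rewrite /tens_rel mulmxBl !act_tensE Defs.compA. Qed.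

Lemma tr_quot N (U A P Q : 'M[algC]_N) :
  (U *m A <= U)%MS -> U *m P = 0 -> (1%:M - P <= U)%MS ->
  U *m Q = 0 -> (1%:M - Q <= U)%MS -> \tr (A *m P) = \tr (A *m Q).
Proof.
move=> sA UP sP UQ sQ.
have kill (X : 'M[algC]_N) (B : 'M[algC]_N) : U *m B = 0 -> (X <= U)%MS -> X *m B = 0.
  by move=> UB /submxP[D ->]; rewrite -mulmxA UB mulmx0.
have e1 : A *m Q = P *m A *m Q.
  have : (1%:M - P) *m A *m Q = 0.
    apply: kill UQ _; apply: submx_trans sA; exact: submxMr.
  by rewrite mulmxBl mul1mx mulmxBl => /eqP; rewrite subr_eq0 => /eqP.
have e2 : P = Q *m P.
  have : (1%:M - Q) *m P = 0 by apply: kill UP sQ.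
  by rewrite mulmxBl mul1mx => /eqP; rewrite subr_eq0 => /eqP.
by rewrite e1 -mulmxA [RHS]mxtrace_mulC -mulmxA -e2.
Qed.

Lemma Ind_char_Pmx (C : category) (hC : FItype C) (c : Obj C) n
  (rho : Defs.Hom C c c -> 'M[algC]_n)
  (rhoM : forall g h, rho (compm g h) = rho g *m rho h) (d : Obj C) (sigma : Defs.Hom C d d) :
  Ind_char rho sigma = \tr (act_tens c n sigma *m Pmx rho d).
Proof.
set U := tens_rels rho d; set A := act_tens c n sigma.
have -> : Ind_char rho sigma = \tr (A *m val_factmod (in_factmod U 1%:M)).
  rewrite /Ind_char /Ind_mx -/U -/A in_factmodE -mulmxA mxtrace_mulC.
  by rewrite -mulmxA -val_factmodE.
symmetry; apply: (tr_quot (U := U)).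
- rewrite {1}/U /tens_rels sumsmxMr_gen; apply/sumsmx_subP => f _.
  rewrite genmxE sumsmxMr_gen; apply/sumsmx_subP => psi _.
  rewrite genmxE sumsmxMr_gen; apply/sumsmx_subP => j _.
  by rewrite genmxE (eqmxMr _ (genmxE _)) rel_act rel_sub.
- apply/sub_kermxP; apply: rels_sub => f psi j.
  by apply/sub_kermxP; apply: (rel_ker hC).
- apply/row_subP => i; rewrite rowE mulmxBr mulmx1.
  by case/mxvec_indexP: i => k j; rewrite -mxvec_delta (rel_row hC) rel_sub.
- apply/eqP; rewrite val_factmodE in_factmodE mul1mx mulmxA -in_factmodE -val_factmodE.
  by rewrite val_factmod_eq0 in_factmod_eq0 submx_refl.
- have := add_sub_fact_mod U (1%:M : 'M_(#|Defs.Hom C c d| * n)).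
  move=> E; rewrite -{1}E addrK; exact: val_submodP.
Qed.

Lemma tr_Pmx (C : category) (c : Obj C) n (rho : Defs.Hom C c c -> 'M[algC]_n)
  (d : Obj C) (sigma : Defs.Hom C d d) :
  \tr (act_tens c n sigma *m Pmx rho d) =
  \sum_(f : Defs.Hom C c d) (f == rr (compm sigma f))%:R * \tr (rho (phi (compm sigma f))).
Proof.
rewrite /mxtrace (reindex (uncurry (@mxvec_index _ _))) /=; last first.
  exact: curry_mxvec_bij.
set T := act_tens c n sigma *m Pmx rho d.
transitivity (\sum_(p : 'I_#|Defs.Hom C c d| * 'I_n) T (mxvec_index p.1 p.2) (mxvec_index p.1 p.2)).
  by apply: eq_bigr => -[k j] _.
rewrite -(pair_bigA _ (fun k j => (act_tens c n sigma *m Pmx rho d) (mxvec_index k j) (mxvec_index k j))) /=.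
rewrite [RHS](reindex (@enum_val (Defs.Hom C c d) predT)) /=; last exact: (onW_bij _ (enum_val_bij _)).
apply: eq_bigr => k _; rewrite mulr_sumr; apply: eq_bigr => j _.
have -> : T (mxvec_index k j) (mxvec_index k j) = (mxvec (delta_mx k j) *m T) 0 (mxvec_index k j).
  by rewrite mxvec_delta -rowE [RHS]mxE.
rewrite /T mulmxA Tm_delta -tensE act_tensE tensE PmxE Pf_tens mxvecE mxE.
by rewrite -colE mxE.
Qed.

Lemma chi_conj (C : category) (hC : FItype C) (c : Obj C) n
  (rho : Defs.Hom C c c -> 'M[algC]_n)
  (rho1 : rho (Defs.idm c) = 1%:M)
  (rhoM : forall g h, rho (compm g h) = rho g *m rho h) (a x : Defs.Hom C c c) :
  x \in conjclass a -> \tr (rho x) = \tr (rho a).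
Proof.
case/conjP => g Eg; have [g' [h1 h2]] := isoC hC g.
have E : rho x = rho g *m rho a *m rho g'.
  by rewrite -!rhoM Eg -Defs.compA h2 Defs.compm1.
by rewrite E mxtrace_mulC mulmxA -rhoM h1 rho1 mul1mx.
Qed.

Lemma class_rep_in (C : category) (c : Obj C) (a : Defs.Hom C c c) :
  class_rep (conjclass a) \in conjclass a.
Proof.
rewrite /class_rep; case: pickP => //= H.
by have := H a; rewrite conj_refl.
Qed.

Lemma sum_classes (C : category) (hC : FItype C) (c : Obj C) n
  (rho : Defs.Hom C c c -> 'M[algC]_n)
  (rho1 : rho (Defs.idm c) = 1%:M)
  (rhoM : forall g h, rho (compm g h) = rho g *m rho h) (x : Defs.Hom C c c) :
  \sum_(mu in conjclasses c) rep_char rho (class_rep mu) * (x \in mu)%:R = \tr (rho x).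
Proof.
rewrite (bigD1 (conjclass x)) /=; last exact: imset_f.
rewrite conj_refl mulr1 /rep_char (chi_conj hC rho1 rhoM (class_rep_in x)).
rewrite big1 ?addr0 // => mu /andP[/imsetP[a _ ->] ne].
case: (boolP (x \in conjclass a)) => [xa|]; last by rewrite mulr0.
by move: ne; rewrite (conj_eq hC xa) eqxx.
Qed.

Definition Qb (C : category) (c d : Obj C) (sigma : Defs.Hom C d d)
  (O : {set Defs.Hom C c d}) (mu : {set Defs.Hom C c c}) : bool :=
  [exists f in O, exists psi in mu, compm sigma f == compm f psi].

Lemma binomX_sum (C : category) (c : Obj C) (mu : {set Defs.Hom C c c}) (d : Obj C)
  (sigma : Defs.Hom C d d) :
  (binomX mu sigma)%:R = \sum_(O in binomset c d) (Qb sigma O mu)%:R :> algC.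
Proof.
rewrite /binomX -sum1_card natr_sum.
rewrite (eq_bigl (fun O => (O \in binomset c d) && Qb sigma O mu)); last first.
  by move=> O; rewrite inE.
rewrite big_mkcondr /=; apply: eq_bigr => O _.
by case: (Qb sigma O mu).
Qed.

Lemma Qb_true (C : category) (hC : FItype C) (c d : Obj C) (sigma : Defs.Hom C d d)
  (f : Defs.Hom C c d) (x : Defs.Hom C c c) (mu : {set Defs.Hom C c c}) :
  compm sigma f = compm f x -> mu \in conjclasses c -> Qb sigma (rorbit f) mu = (x \in mu).
Proof.
move=> Ef /imsetP[a0 _ ->]; apply/idP/idP.
  case/existsP => g /andP[/rorbitP[a ->] /existsP[psi /andP[psimu /eqP E]]].
  have E2 : compm x a = compm a psi.
    apply: (@monoC _ hC _ _ f _ _ _).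
    by rewrite Defs.compA -Ef -Defs.compA E Defs.compA.
  case/conjP: psimu => g' Eg'.
  apply/conjP; exists (compm a g').
  by rewrite -Defs.compA Eg' Defs.compA -E2 Defs.compA.
move=> xmu; apply/existsP; exists f; rewrite self_rorbit /=.
by apply/existsP; exists x; rewrite xmu Ef eqxx.
Qed.

Lemma Qb_false (C : category) (hC : FItype C) (c d : Obj C) (sigma : Defs.Hom C d d)
  (f : Defs.Hom C c d) (mu : {set Defs.Hom C c c}) :
  Qb sigma (rorbit f) mu -> rr (compm sigma f) = rr f.
Proof.
case/existsP => g /andP[/rorbitP[a ->] /existsP[psi /andP[_ /eqP E]]].
have [b [h1 h2]] := isoC hC a.
have Es : compm sigma f = compm f (compm a (compm psi b)).
  rewrite -[compm sigma f]Defs.compm1 -h2 !Defs.compA -(Defs.compA sigma f a) E.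
  by rewrite -!Defs.compA.
by rewrite Es (rrM hC).
Qed.

Lemma per_f (C : category) (hC : FItype C) (c : Obj C) n
  (rho : Defs.Hom C c c -> 'M[algC]_n)
  (rho1 : rho (Defs.idm c) = 1%:M)
  (rhoM : forall g h, rho (compm g h) = rho g *m rho h) (d : Obj C)
  (sigma : Defs.Hom C d d) (f : Defs.Hom C c d) :
  (f == rr (compm sigma f))%:R * \tr (rho (phi (compm sigma f))) =
  if rr f == f then
    \sum_(mu in conjclasses c) rep_char rho (class_rep mu) * (Qb sigma (rorbit f) mu)%:R
  else 0.
Proof.
case: (eqVneq (rr f) f) => [rf|rf]; last first.
  case: eqP => [E|]; last by rewrite mul0r.
  by move: rf; rewrite {1}E (rr_idem hC) -E eqxx.
case: (eqVneq f (rr (compm sigma f))) => [E|ne].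
  rewrite mul1r.
  have Ef : compm sigma f = compm f (phi (compm sigma f)).
    by rewrite {2}E (phiP hC).
  rewrite -(sum_classes hC rho1 rhoM); apply: eq_bigr => mu mu_in.
  by rewrite (Qb_true hC Ef mu_in).
rewrite mul0r big1 // => mu _.
case: (boolP (Qb sigma (rorbit f) mu)) => [Q|]; last by rewrite mulr0.
by move: ne; rewrite (Qb_false hC Q) rf eqxx.
Qed.

Lemma binomset_sum (C : category) (hC : FItype C) (c d : Obj C)
  (G : {set Defs.Hom C c d} -> algC) :
  \sum_(O in binomset c d) G O = \sum_(f | rr f == f) G (rorbit f).
Proof.
have -> : binomset c d = [set rorbit f | f in [set f | rr f == f]].
  apply/setP => O; apply/imsetP/imsetP => [[f _ ->]|[f _ ->]]; last by exists f.
  have /rorbitP[a Ea] := rr_in f.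
  exists (rr f); first by rewrite inE (rr_idem hC).
  by rewrite Ea (rorbitM hC).
rewrite big_imset /=; last first.
  move=> f g; rewrite !inE => /eqP rf /eqP rg E.
  by rewrite -rf -rg (rr_orbit E).
by apply: eq_bigl => f; rewrite inE.
Qed.

Import Pilot.Defs.

Theorem mainTheorem7 (C : category) (hC : FItype C) (c : Obj C) (n : nat)
    (rho : Hom C c c -> 'M[algC]_n)
    (rho1 : rho (idm c) = 1%:M)
    (rhoM : forall g h : Hom C c c, rho (compm g h) = rho g *m rho h) :
  forall (d : Obj C) (sigma : Hom C d d),
    Ind_char rho sigma =
    \sum_(mu in conjclasses c) rep_char rho (class_rep mu) * (binomX mu sigma)%:R.
Proof.
move=> d sigma.
rewrite (Ind_char_Pmx hC rhoM) tr_Pmx.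
under [RHS]eq_bigr => mu _ do rewrite binomX_sum mulr_sumr.
rewrite exchange_big /= (binomset_sum hC).
rewrite [RHS]big_mkcond /=; apply: eq_bigr => f _.
exact: (per_f hC rho1 rhoM).
Qed.
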